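(* Let $n\ge 2$, let $X_2,\ldots,X_n$ be independent and uniformly distributed on $\{0,1\}$, and let $X_1=1-\prod_{i=2}^n X_i$. Then (a) $X_1,\ldots,X_n$ satisfy negative regression; and (b) for $f(X)=\sum_{i=1}^n X_i$ and $Y_k=\mathbb{E}[f(X)\mid X_1,\ldots,X_k]$, we have $Y_0=\frac{n+1}{2}-\frac{1}{2^{n-1}}$, and on the event $\{X_1=0\}$, which has probability $2^{-(n-1)}$, $Y_1=n-1$; in particular $Y_1-Y_0=\frac{n-3}{2}+\frac{1}{2^{n-1}}$ on this event.
   Context: For $S\subseteq[n]$, $X_S\in\{0,1\}^S$ denotes the tuple $(X_i)_{i\in S}$. The variables $X_1,\ldots,X_n$ satisfy negative regression if for all disjoint $I,J\subseteq[n]$, every non-decreasing function $g:\{0,1\}^I\to\mathbb{R}$, and all $a\le b$ in $\{0,1\}^J$ (coordinatewise) such that $\Pr[X_J=a]>0$ and $\Pr[X_J=b]>0$, we have $\mathbb{E}[g(X_I)\mid X_J=a]\ge \mathbb{E}[g(X_I)\mid X_J=b]$. *)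

(* Defs.v *)
From HB Require Import structures.
From mathcomp Require Import all_boot all_order all_algebra.
Set Implicit Arguments. Unset Strict Implicit. Unset Printing Implicit Defensive.
Import Order.TTheory GRing.Theory Num.Theory.
Local Open Scope ring_scope.

Definition idx (n : nat) (S : {set 'I_n}) := {i : 'I_n | i \in S}.

Definition restr (n : nat) (S : {set 'I_n}) (x : 'I_n -> bool)
  : {ffun idx S -> bool} := [ffun i => x (val i)].

Definition bleq (T : finType) (a b : {ffun T -> bool}) : bool :=
  [forall i, a i ==> b i].

(* Random vector Xv : Ω -> {0,1}^n on a finite sample space Ω with the
   uniform probability measure. *)
Definition event (Om : finType) (n : nat) (Xv : Om -> 'I_n -> bool)
  (J : {set 'I_n}) (a : {ffun idx J -> bool}) : {set Om} :=
  [set w | restr J (Xv w) == a].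

Definition Pr (R : realFieldType) (Om : finType) (A : {set Om}) : R :=
  #|A|%:R / #|Om|%:R.

Definition cond_exp (R : realFieldType) (Om : finType) (n : nat)
  (Xv : Om -> 'I_n -> bool) (h : ('I_n -> bool) -> R) (A : {set Om}) : R :=
  (\sum_(w in A) h (Xv w)) / #|A|%:R.

Definition neg_regression (R : realFieldType) (Om : finType) (n : nat)
  (Xv : Om -> 'I_n -> bool) : Prop :=
  forall (I J : {set 'I_n}), [disjoint I & J] ->
  forall g : {ffun idx I -> bool} -> R,
    (forall x y, bleq x y -> g x <= g y) ->
  forall a b : {ffun idx J -> bool}, bleq a b ->
    0 < Pr R (event Xv a) -> 0 < Pr R (event Xv b) ->
    cond_exp Xv (fun x => g (restr I x)) (event Xv b)
      <= cond_exp Xv (fun x => g (restr I x)) (event Xv a).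

Definition fsum (R : realFieldType) (n : nat) (x : 'I_n -> bool) : R :=
  \sum_(i < n) (x i)%:R.

(* Y_k(w) = E[f(X) | X_1,...,X_k] evaluated at outcome w;
   index i : 'I_n (0-based) corresponds to X_{i+1}. *)
Definition firstk (n k : nat) : {set 'I_n} := [set i : 'I_n | (i < k)%N].

Definition Ymart (R : realFieldType) (Om : finType) (n : nat)
  (Xv : Om -> 'I_n -> bool) (k : nat) (w : Om) : R :=
  cond_exp Xv (@fsum R n) (event Xv (restr (firstk n k) (Xv w))).

(* Sample space: {0,1}^n with uniform measure; the
   coordinates 1..n-1 (0-based) are the independent fair bits X_2..X_n;
   coordinate 0 of the sample point is an unused extra fair coin. *)
Definition Omega (n : nat) := {ffun 'I_n -> bool}.

Definition Xex (n : nat) (w : Omega n) (i : 'I_n) : bool :=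
  if nat_of_ord i == 0%N then ~~ [forall j : 'I_n, (0 < j)%N ==> w j]
  else w i.

(* Main.v *)
Require Import Defs.
From HB Require Import structures.
From mathcomp Require Import all_boot all_order all_algebra.
From mathcomp Require Import ring lra zify.
Import Order.TTheory GRing.Theory Num.Theory.
Set Implicit Arguments. Unset Strict Implicit. Unset Printing Implicit Defensive.
Local Open Scope ring_scope.

Lemma avg_map (R : realFieldType) (Om : finType) (h : Om -> R) (A B : {set Om}) (phi : Om -> Om) :
  injective phi -> (0 < #|A|)%N -> (0 < #|B|)%N ->
  (forall w, w \in B -> phi w \in A) ->
  (forall w, w \in B -> h w <= h (phi w)) ->
  (forall v w, v \in A -> v \notin phi @: B -> w \in B -> h w <= h v) ->
  (\sum_(w in B) h w) / #|B|%:R <= (\sum_(w in A) h w) / #|A|%:R.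
Proof.
move=> injphi A0 B0 inA hle hC.
set C := A :\: phi @: B.
have sub : phi @: B \subset A by apply/subsetP=> x /imsetP [w wB ->]; exact: inA.
have eA : \sum_(w in A) h w = \sum_(w in B) h (phi w) + \sum_(w in C) h w.
  rewrite (big_setID (phi @: B)) /= (setIidPr sub) big_imset //.
  by move=> x y _ _; apply: injphi.
have cA : #|A| = (#|B| + #|C|)%N.
  by rewrite -(cardsID (phi @: B) A) (setIidPr sub) card_imset.
have H1 : \sum_(w in B) h w <= \sum_(w in B) h (phi w) by apply: ler_sum.
have H2 : \sum_(v in C) \sum_(w in B) h w <= \sum_(v in C) \sum_(w in B) h v.
  apply: ler_sum => v; rewrite inE => /andP [vnot vA]; apply: ler_sum => w wB.
  exact: hC.
rewrite sumr_const in H2.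
rewrite [X in _ <= X](eq_bigr (fun v => h v *+ #|B|)) in H2; last by move=> v _; rewrite sumr_const.
have H3 : (\sum_(w in B) h w) * #|C|%:R <= (\sum_(w in C) h w) * #|B|%:R.
  by rewrite sumrMnl in H2; rewrite !mulr_natr.
clear H2.
have NB0 : 0 < (#|B|%:R : R) by rewrite ltr0n.
have NA0 : 0 < (#|A|%:R : R) by rewrite ltr0n.
rewrite ler_pdivrMr // mulrAC ler_pdivlMr // eA cA natrD.
set SB := \sum_(w in B) h w in H1 H3 *.
set SP := \sum_(w in B) h (phi w) in H1 *.
set SC := \sum_(w in C) h w in H3 *.
have := ler_wpM2r (ltW NB0) H1.
nra.
Qed.

Lemma avg_top (R : realFieldType) (Om : finType) (h : Om -> R) (A B : {set Om}) (M : R) :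
  (0 < #|A|)%N -> (0 < #|B|)%N ->
  (forall w, w \in B -> h w <= M) -> (forall w, w \in A -> h w = M) ->
  (\sum_(w in B) h w) / #|B|%:R <= (\sum_(w in A) h w) / #|A|%:R.
Proof.
move=> A0 B0 hB hA.
have NB0 : 0 < (#|B|%:R : R) by rewrite ltr0n.
have NA0 : 0 < (#|A|%:R : R) by rewrite ltr0n.
have -> : \sum_(w in A) h w = M *+ #|A|.
  by rewrite (eq_bigr (fun _ => M)) ?sumr_const.
rewrite -[M *+ _]mulr_natr mulfK ?gt_eqF //.
rewrite ler_pdivrMr // mulr_natr.
have <- : \sum_(w in B) M = M *+ #|B| by rewrite sumr_const.
by apply: ler_sum.
Qed.

Definition tau n (w : Omega n) := [forall j : 'I_n, (0 < j)%N ==> w j].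

Lemma XexE0 n (w : Omega n) (i : 'I_n) : nat_of_ord i = 0%N -> Xex w i = ~~ tau w.
Proof. by move=> h; rewrite /Xex h. Qed.

Lemma XexEn n (w : Omega n) (i : 'I_n) : nat_of_ord i != 0%N -> Xex w i = w i.
Proof. by move=> h; rewrite /Xex (negbTE h). Qed.

Definition mask n (J : {set 'I_n}) (a b : {ffun idx J -> bool}) (k : 'I_n) : bool :=
  if (insub k : option (idx J)) is Some s then a s != b s else false.

Definition flip n (m : 'I_n -> bool) (w : Omega n) : Omega n := [ffun k => w k (+) m k].

Lemma flipK n (m : 'I_n -> bool) : involutive (flip m).
Proof. by move=> w; apply/ffunP=> k; rewrite !ffunE addbK. Qed.

Lemma mask_val n (J : {set 'I_n}) (a b : {ffun idx J -> bool}) (s : idx J) :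
  mask a b (val s) = (a s != b s).
Proof. by rewrite /mask valK. Qed.

Lemma mask_out n (J : {set 'I_n}) (a b : {ffun idx J -> bool}) (k : 'I_n) :
  k \notin J -> mask a b k = false.
Proof. by move=> h; rewrite /mask insubN. Qed.

Lemma Xex_flip n (m : 'I_n -> bool) (w : Omega n) (k : 'I_n) :
  nat_of_ord k != 0%N -> Xex (flip m w) k = Xex w k (+) m k.
Proof. by move=> h; rewrite !XexEn // ffunE. Qed.

Lemma memE n (J : {set 'I_n}) (a : {ffun idx J -> bool}) (w : Omega n) :
  w \in event (@Xex n) a -> forall s, Xex w (val s) = a s.
Proof. by rewrite inE => /eqP <- s; rewrite ffunE. Qed.

Lemma memI n (J : {set 'I_n}) (a : {ffun idx J -> bool}) (w : Omega n) :
  (forall s, Xex w (val s) = a s) -> w \in event (@Xex n) a.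
Proof. by move=> h; rewrite inE; apply/eqP/ffunP=> s; rewrite ffunE h. Qed.

Lemma tau_flip_false n (m : 'I_n -> bool) (w : Omega n) (j : 'I_n) :
  nat_of_ord j != 0%N -> Xex w j = true -> m j = true -> tau (flip m w) = false.
Proof.
move=> nz wj mj; apply/negbTE/forallPn; exists j.
rewrite ffunE mj -(XexEn w nz) wj /=.
by rewrite lt0n nz.
Qed.

Lemma cardpos (R : realFieldType) (Om : finType) (A : {set Om}) :
  0 < Pr R A -> (0 < #|A|)%N.
Proof. by rewrite /Pr lt0n; case: #|A| => //; rewrite mul0r ltxx. Qed.

Lemma neg_reg (R : realFieldType) (n : nat) : neg_regression R (@Xex n).
Proof.
move=> I J dIJ g gmono a b ab Pa Pb.
have A0 := cardpos Pa; have B0 := cardpos Pb.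
rewrite /cond_exp.
case: (eqVneq a b) => [<- | neab]; first exact: lexx.
have [j0 aj0 bj0] : exists2 j0, a j0 = false & b j0 = true.
  case/boolP: [exists j, a j != b j] => [/existsP [j Hj] | /existsPn H].
    exists j; move: (forallP ab j) Hj; by case: (a j); case: (b j).
  by case/eqP: neab; apply/ffunP=> j; apply/eqP; rewrite -[_ == _]negbK H.
have notJ : forall i : idx I, val i \notin J.
  by move=> i; rewrite (disjointFr dIJ (valP i)).
have mI : forall (i : idx I), mask a b (val i) = false.
  by move=> i; apply: mask_out.
set phi := flip (mask a b).
have phiinj : injective phi by apply: (can_inj (flipK _)).
have fnz : forall w s, nat_of_ord (val s) != 0%N -> Xex w (val s) = b s ->
    Xex (phi w) (val s) = a s.
  move=> w s nz h; rewrite Xex_flip // h mask_val.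
  by case: (a s); case: (b s).
have fnz' : forall w s, nat_of_ord (val s) != 0%N -> Xex w (val s) = a s ->
    Xex (phi w) (val s) = b s.
  move=> w s nz h; rewrite Xex_flip // h mask_val.
  by case: (a s); case: (b s).
have mj0 : mask a b (val j0) = true by rewrite mask_val aj0 bj0.
case/boolP: [exists s : idx J, nat_of_ord (val s) == 0%N] => [/existsP [s0 /eqP s00] | /existsPn noz].
  have uniq0 : forall s : idx J, nat_of_ord (val s) = 0%N -> s = s0.
    by move=> s hs; apply: val_inj; apply: ord_inj; rewrite hs s00.
  have Inz : forall i : idx I, nat_of_ord (val i) != 0%N.
    move=> i; apply/eqP=> hi; have := notJ i.
    have -> : val i = val s0 by apply: ord_inj; rewrite hi s00.
    by rewrite (valP s0).
  case as0 : (a s0); last first.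
  - apply: (@avg_top _ _ (fun w => g (restr I (Xex w))) _ _ (g [ffun => true])) => //.
      move=> w _; apply: gmono; apply/forallP=> i; by rewrite ffunE implybT.
    move=> w wa; congr g; apply/ffunP=> i; rewrite !ffunE XexEn ?Inz //.
    have ht : tau w by have := memE wa s0; rewrite as0 XexE0 //; case: (tau w).
    by move: ht; rewrite /tau => /forallP /(_ (val i)); rewrite lt0n Inz.
  - have bs0 : b s0 = true by move: (forallP ab s0); rewrite as0.
    have j0nz : nat_of_ord (val j0) != 0%N.
      by apply/eqP=> h; move: aj0; rewrite (uniq0 _ h) as0.
    apply: (@avg_map _ _ (fun w => g (restr I (Xex w))) _ _ phi) => //.
    + move=> w wb; apply: memI => s.
      case: (eqVneq (nat_of_ord (val s)) 0%N) => [h | h]; last by apply: fnz => //; exact: memE wb s.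
      rewrite (uniq0 _ h) as0 XexE0 ?s00 //.
      by rewrite (tau_flip_false j0nz (etrans (memE wb j0) bj0) mj0).
    + move=> w wb; apply: gmono; apply/forallP=> i.
      by rewrite !ffunE Xex_flip ?Inz // mI addbF implybb.
    + move=> v w va vn wb.
      have htf : tau (phi v).
        apply/negPn/negP => hf; move/negP: vn; apply.
        rewrite -[v](flipK (mask a b)); apply: imset_f; apply: memI => s.
        case: (eqVneq (nat_of_ord (val s)) 0%N) => [h|h]; last by apply: fnz' => //; exact: memE va s.
        by rewrite (uniq0 _ h) bs0 XexE0 ?s00 // (negbTE hf).
      apply: gmono; apply/forallP=> i; rewrite !ffunE (XexEn v) ?Inz //.
      move: htf; rewrite /tau => /forallP /(_ (val i)); rewrite lt0n Inz /= ffunE mI addbF => ->.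
      exact: implybT.
have noz' : forall s : idx J, nat_of_ord (val s) != 0%N by move=> s; exact: noz.
apply: (@avg_map _ _ (fun w => g (restr I (Xex w))) _ _ phi) => //.
+ move=> w wb; apply: memI => s; exact: fnz (noz' s) (memE wb s).
+ move=> w wb; apply: gmono; apply/forallP=> i; rewrite !ffunE.
  case: (eqVneq (nat_of_ord (val i)) 0%N) => [h|h]; last by rewrite Xex_flip // mI addbF implybb.
  by rewrite (XexE0 (phi w)) // (tau_flip_false (noz' j0) (etrans (memE wb j0) bj0) mj0) implybT.
+ move=> v w va vn wb; exfalso; move/negP: vn; apply.
  rewrite -[v](flipK (mask a b)); apply: imset_f; apply: memI => s.
  exact: fnz' (noz' s) (memE va s).
Qed.
Lemma sum_ind (R : realFieldType) (Om : finType) (P : pred Om) :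
  \sum_w ((P w)%:R : R) = #|[set w | P w]|%:R.
Proof.
rewrite (bigID P) /= [X in _ + X]big1 ?addr0; last by move=> w /negbTE ->.
rewrite (eq_bigr (fun _ => 1)); last by move=> w ->.
rewrite (eq_bigl (fun w => w \in [set w | P w])); last by move=> w; rewrite inE.
by rewrite sumr_const.
Qed.

Lemma card_Om n : #|Omega n| = (2 ^ n)%N.
Proof. by rewrite card_ffun card_bool card_ord. Qed.

Lemma card_tset m : #|[set w : Omega m.+2 | tau w]| = 2%N.
Proof.
pose f1 : Omega m.+2 := [ffun _ => true].
pose f2 : Omega m.+2 := [ffun k => k != ord0].
have -> : [set w : Omega m.+2 | tau w] = [set f1; f2].
  apply/setP=> w; rewrite !inE; apply/idP/idP.
    move=> /forallP ht.
    have hk : forall k : 'I_m.+2, k != ord0 -> w k.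
      move=> k kn; have := ht k; rewrite lt0n.
      have -> : nat_of_ord k != 0%N by apply: contraNneq kn => h; apply/eqP; apply: ord_inj.
      by [].
    case w0 : (w ord0); apply/orP; [left | right]; apply/eqP/ffunP => k; rewrite ffunE;
      case: (eqVneq k ord0) => [->|kn] //; exact: hk.
  case/orP => /eqP ->; apply/forallP => k; rewrite ffunE ?implybT //.
  by apply/implyP => hk; apply: contraTneq hk => ->.
rewrite cards2; suff -> : f1 != f2 by [].
apply/eqP => e; have := congr1 (fun f : Omega m.+2 => f ord0) e; by rewrite !ffunE.
Qed.

Lemma card_i n (i : 'I_n) : #|[set w : Omega n | w i]| = (2 ^ n.-1)%N.
Proof.
set A := [set w : Omega n | w i].
have im : [set flip (fun k => k == i) w | w in A] = ~: A.
  apply/setP=> w; rewrite !inE; apply/imsetP/idP.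
    by case=> v; rewrite inE => vA ->; rewrite ffunE eqxx vA.
  move=> wn; exists (flip (fun k => k == i) w); last by rewrite flipK.
  by rewrite inE ffunE eqxx addbT.
have := cardsC A; rewrite -im card_imset; last exact: (can_inj (flipK _)).
have e : forall k, (0 < k)%N -> (2 ^ k = 2 * 2 ^ k.-1)%N by case=> // k _; rewrite expnS.
rewrite card_Om (e n (leq_ltn_trans (leq0n i) (ltn_ord i))); lia.
Qed.

Lemma Y0 (R : realFieldType) m (w : Omega m.+2) :
  Ymart R (@Xex m.+2) 0 w = (m.+3)%:R / 2 - 1 / 2 ^+ m.+1.
Proof.
rewrite /Ymart /cond_exp.
have -> : event (@Xex m.+2) (restr (firstk m.+2 0) (Xex w)) = setT.
  apply/setP=> v; rewrite !inE; apply/eqP/ffunP => s; have := valP s; by rewrite inE ltn0.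
rewrite cardsT card_Om.
have -> : \sum_(v in [set: Omega m.+2]) fsum R (Xex v) = \sum_(v : Omega m.+2) fsum R (Xex v).
  by apply: eq_bigl => v; rewrite inE.
rewrite /fsum exchange_big /= (eq_bigr (fun i => #|[set v : Omega m.+2 | Xex v i]|%:R)); last first.
  by move=> i _; rewrite sum_ind.
rewrite big_ord_recl.
have -> : [set v : Omega m.+2 | Xex v ord0] = ~: [set v | tau v].
  by apply/setP=> v; rewrite !inE XexE0.
have hC : (#|~: [set v : Omega m.+2 | tau v]|%:R : R) = 2 ^+ m.+2 - 2.
  have := cardsC [set v : Omega m.+2 | tau v]; rewrite card_tset card_Om.
  move=> /(congr1 (fun k => k%:R : R)); rewrite natrD natrX => <-; rewrite [2 + _]addrC.
  by rewrite addrK.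
rewrite hC (eq_bigr (fun _ => (2 ^+ m.+1 : R))); last first.
  move=> j _.
  have -> : [set v : Omega m.+2 | Xex v (lift ord0 j)] = [set v : Omega m.+2 | v (lift ord0 j)].
    by apply/setP=> v; rewrite !inE XexEn.
  by rewrite card_i natrX.
rewrite sumr_const card_ord -[_ *+ m.+1]mulr_natr natrX !exprS.
have h2 : (2 ^+ m : R) != 0 by rewrite expf_neq0 // pnatr_eq0.
rewrite -[(m.+3)%:R]natr1 -[(m.+2)%:R]natr1 -[(m.+1)%:R]natr1.
by field.
Qed.

Lemma Pr0 (R : realFieldType) m (i0 : 'I_m.+2) : nat_of_ord i0 = 0%N ->
  Pr R [set w : Omega m.+2 | ~~ Xex w i0] = 1 / 2 ^+ m.+1.
Proof.
move=> h0; rewrite /Pr.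
have -> : [set w : Omega m.+2 | ~~ Xex w i0] = [set w | tau w].
  by apply/setP=> v; rewrite !inE XexE0 // negbK.
rewrite card_tset card_Om natrX exprS.
have h2 : (2 ^+ m.+1 : R) != 0 by rewrite expf_neq0 // pnatr_eq0.
by field.
Qed.

Lemma Y1 (R : realFieldType) m (i0 : 'I_m.+2) (w : Omega m.+2) :
  nat_of_ord i0 = 0%N -> Xex w i0 = false ->
  Ymart R (@Xex m.+2) 1 w = (m.+1)%:R.
Proof.
move=> h0 hw; rewrite /Ymart /cond_exp.
have -> : event (@Xex m.+2) (restr (firstk m.+2 1) (Xex w)) = [set v | tau v].
  apply/setP=> v; rewrite !inE; apply/eqP/idP.
    have s0in : (ord0 : 'I_m.+2) \in firstk m.+2 1 by rewrite inE.
    move=> e; have := congr1 (fun f : {ffun idx (firstk m.+2 1) -> bool} => f (exist _ ord0 s0in)) e.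
    rewrite !ffunE /=.
    have -> : (ord0 : 'I_m.+2) = i0 by apply: ord_inj; rewrite h0.
    by rewrite hw XexE0 //; case: (tau v).
  move=> ht; apply/ffunP => s; rewrite !ffunE.
  have : val s \in firstk m.+2 1 := valP s.
  rewrite inE ltnS leqn0 => /eqP hs.
  have -> : val s = i0 by apply: ord_inj; rewrite hs h0.
  by rewrite hw XexE0 // ht.
rewrite (eq_bigr (fun _ => (m.+1)%:R)); last first.
  move=> v; rewrite inE => ht.
  rewrite /fsum big_ord_recl XexE0 // ht /= add0r.
  rewrite (eq_bigr (fun _ => 1)); last first.
    move=> j _; rewrite XexEn //.
    by move: ht; rewrite /tau => /forallP /(_ (lift ord0 j)) /implyP -> .
  by rewrite sumr_const card_ord.
rewrite sumr_const card_tset -[_ *+ 2]mulr_natr mulfK //.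
by rewrite pnatr_eq0.
Qed.


Theorem mainTheorem5 (R : realFieldType) (n : nat) (hn : (2 <= n)%N) :
  neg_regression R (@Xex n) /\
  (forall w : Omega n,
     Ymart R (@Xex n) 0 w = (n.+1)%:R / 2 - 1 / 2 ^+ n.-1) /\
  (forall i0 : 'I_n, nat_of_ord i0 = 0%N ->
     Pr R [set w : Omega n | ~~ Xex w i0] = 1 / 2 ^+ n.-1 /\
     (forall w : Omega n, Xex w i0 = false ->
        Ymart R (@Xex n) 1 w = (n.-1)%:R /\
        Ymart R (@Xex n) 1 w - Ymart R (@Xex n) 0 w
          = (n%:R - 3) / 2 + 1 / 2 ^+ n.-1)).
Proof.
case: n hn => [|[|m]] // _.
split; first exact: neg_reg.
split; first by move=> w; exact: Y0.
move=> i0 h0; split; first exact: Pr0.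
move=> w hw; rewrite (Y1 _ h0 hw) Y0; split => //=.
have h2 : (2 ^+ m.+1 : R) != 0 by rewrite expf_neq0 // pnatr_eq0.
rewrite -[(m.+3)%:R]natr1 -[(m.+2)%:R]natr1 -[(m.+1)%:R]natr1.
by field.
Qed.
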